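(* Let $\lambda,\mu\in\mathbb{C}$ and integers $m,N_T\ge1$. Let $E_\Delta^F=I-A_c^{-1}A_S$ and $E_\Delta^{FCF}=(I-A_c^{-1}A_S)(I-A_S)$ with $A_c=\mathcal{B}_{N_T}(\mu)$, $A_S=\mathcal{B}_{N_T}(\lambda^m)$. Then $E_\Delta^F$ is the lower triangular Toeplitz matrix whose $(i,j)$ entry is $(\lambda^m-\mu)\mu^{i-j-1}$ for $i>j$ and $0$ otherwise, and $E_\Delta^{FCF}$ is the lower triangular Toeplitz matrix whose $(i,j)$ entry is $(\lambda^m-\mu)\lambda^m\mu^{i-j-2}$ for $i\ge j+2$ and $0$ otherwise. Moreover, for every integer $k\ge1$ with $k\le N_T$, $$\|(E_\Delta^F)^k\|_1=\|(E_\Delta^F)^k\|_\infty=|\lambda^m-\mu|^k\sum_{j=0}^{N_T-k}\binom{j+k-1}{j}|\mu|^j,$$ and for every integer $k\ge1$ with $2k\le N_T$, $$\|(E_\Delta^{FCF})^k\|_1=\|(E_\Delta^{FCF})^k\|_\infty=|\lambda^m-\mu|^k|\lambda|^{mk}\sum_{j=0}^{N_T-2k}\binom{j+k-1}{j}|\mu|^j.$$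
   Context: For a scalar $g$, $\mathcal{B}_{N_T}(g)$ denotes the $(N_T+1)\times(N_T+1)$ matrix (rows/columns indexed $0,\dots,N_T$) with ones on the diagonal, $-g$ on the first subdiagonal, and zeros elsewhere. $\|\cdot\|_1$ and $\|\cdot\|_\infty$ are the maximum absolute column sum and maximum absolute row sum matrix norms. *)

(* Defs.v *)
(* The complex numbers are represented by an arbitrary
   numClosedFieldType C (of which the complex field is the model). *)
From HB Require Import structures.
From mathcomp Require Import all_boot all_order all_algebra.
Set Implicit Arguments. Unset Strict Implicit. Unset Printing Implicit Defensive.
Import Order.TTheory GRing.Theory Num.Theory.
Local Open Scope ring_scope.

Definition bidiag {C : nzRingType} (N : nat) (g : C) : 'M[C]_(N.+1) :=
  \matrix_(i, j) (if i == j :> nat then 1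
                  else if i == j.+1 :> nat then - g else 0).

Definition norm1 {C : numDomainType} (n : nat) (A : 'M[C]_n) : C :=
  \big[Num.max/0]_(j < n) \sum_(i < n) `|A i j|.

Definition normInf {C : numDomainType} (n : nat) (A : 'M[C]_n) : C :=
  \big[Num.max/0]_(i < n) \sum_(j < n) `|A i j|.

(* Main.v *)
Require Import Defs.
From HB Require Import structures.
From mathcomp Require Import all_boot all_order all_algebra.
From mathcomp Require Import zify ring lra.
Set Implicit Arguments. Unset Strict Implicit. Unset Printing Implicit Defensive.
Import Order.TTheory GRing.Theory Num.Theory.
Local Open Scope ring_scope.


Lemma sum_window (R : nzRingType) n (P : pred nat) (F : nat -> R) lo hi :
  (forall t, t < n -> P t = (lo <= t) && (t < hi))%N -> (hi <= n)%N ->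
  \sum_(t < n) (if P t then F t else 0) = \sum_(u < hi - lo) F (u + lo)%N.
Proof.
move=> HP hn; rewrite -(big_mkord xpredT (fun t => if P t then F t else 0)).
case: (leqP lo hi) => hlh.
- rewrite (@big_cat_nat _ _ _ lo 0 n) ?(leq_trans hlh hn) //=.
  rewrite (@big_cat_nat _ _ _ hi lo n) //=.
  rewrite big1_seq ?add0r; last first.
    move=> t /andP[_]; rewrite mem_index_iota => ht; rewrite HP; last by lia.
    case: ifP => // /andP[h1 h2]; exfalso; lia.
  rewrite [X in _ + X]big1_seq ?addr0; last first.
    move=> t /andP[_]; rewrite mem_index_iota => ht; rewrite HP; last by lia.
    case: ifP => // /andP[h1 h2]; exfalso; lia.
  rewrite (eq_big_nat _ _ (F2 := F)); last first.
    by move=> t ht; rewrite HP ?ht //; lia.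
  by rewrite -[lo]add0n big_addn big_mkord add0n.
- rewrite big1_seq; last first.
    move=> t; rewrite mem_index_iota => ht; rewrite HP; last by lia.
    case: ifP => // /andP[h1 h2]; exfalso; lia.
  have -> : (hi - lo = 0)%N by lia.
  by rewrite big_ord0.
Qed.

Lemma sum_mono (R : numDomainType) (g : nat -> R) m1 m2 :
  (forall u, 0 <= g u) -> (m1 <= m2)%N ->
  \sum_(u < m1) g u <= \sum_(u < m2) g u.
Proof.
move=> g0 h; rewrite -!(big_mkord xpredT) (@big_cat_nat _ _ _ m1 0 m2) //=.
by rewrite lerDl sumr_ge0.
Qed.

Lemma bigmax_seq (R : numDomainType) (I : eqType) (r : seq I) (F : I -> R) j0 :
  (forall j, 0 <= F j <= F j0) -> j0 \in r ->
  \big[Num.max/0]_(j <- r) F j = F j0.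
Proof.
move=> hF; elim: r => [//|x r IH] /=.
have P : 0 <= \big[Num.max/0]_(j <- r) F j <= F j0.
  apply: (big_ind (fun x => 0 <= x <= F j0)).
  - by rewrite lexx /=; have := hF j0; case/andP.
  - move=> a b ha hb; rewrite /Num.max /Order.max; by case: ifP.
  - by move=> j _; apply: hF.
rewrite in_cons big_cons /Num.max /Order.max => /orP[/eqP <-|hin].
  by case/andP: P => _ h; rewrite le_gtF.
rewrite (IH hin); case: ifP => // hlt.
have := hF x; case/andP => _ hle; apply/eqP; move: hlt; rewrite lt_def hle andbT.
by move/negbT; rewrite negbK eq_sym.
Qed.

Lemma bigmax_attained (R : numDomainType) n (F : 'I_n -> R) j0 :
  (forall j, 0 <= F j <= F j0) ->
  \big[Num.max/0]_(j < n) F j = F j0.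
Proof. by move=> hF; rewrite (bigmax_seq hF) // mem_index_enum. Qed.



Definition tmx (R : nzRingType) (n : nat) (a : nat -> R) : 'M[R]_n :=
  \matrix_(i, j) (if (j <= i)%N then a (i - j)%N else 0).

Definition conv (R : nzRingType) (a b : nat -> R) (d : nat) : R :=
  \sum_(t < d.+1) a (d - t)%N * b t.

Lemma tmx_mul (R : nzRingType) n (a b : nat -> R) :
  tmx n a *m tmx n b = tmx n (conv a b).
Proof.
apply/matrixP => i j; rewrite !mxE.
under eq_bigr => l _ do rewrite !mxE.
rewrite (eq_bigr (fun l : 'I_n => if ((j <= l)%N && (l < i.+1)%N) then a (i - l)%N * b (l - j)%N else 0)); last first.
  move=> l _; rewrite ltnS; case: (leqP l i) => h1; case: (leqP j l) => h2 /=;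
  by rewrite ?mul0r ?mulr0.
rewrite (@sum_window _ _ (fun l => (j <= l) && (l < i.+1))%N (fun l => a (i - l)%N * b (l - j)%N) j i.+1) //.
case: leqP => hji.
  have -> : (i.+1 - j = (i - j).+1)%N by lia.
  apply: eq_bigr => u _; congr (a _ * b _); lia.
have -> : (i.+1 - j = 0)%N by lia.
by rewrite big_ord0.
Qed.

Fixpoint pw (R : nzRingType) (f : nat -> R) (k : nat) : nat -> R :=
  if k is k'.+1 then conv (pw f k') f else f.

Lemma tmx_pow (R : nzRingType) n (f : nat -> R) k :
  tmx n.+1 f ^+ k.+1 = tmx n.+1 (pw f k).
Proof.
elim: k => [|k IH]; first by rewrite expr1.
by rewrite exprSr IH /= -tmx_mul.
Qed.

Lemma hockey D k : (\sum_(u < D.+1) 'C(D - u + k, k) = 'C(D + k.+1, k.+1))%N.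
Proof.
elim: D => [|D IH]; first by rewrite big_ord_recl big_ord0 /= addn0 !binn.
rewrite big_ord_recl /=.
under eq_bigr => u _ do rewrite /bump /= add1n subSS.
rewrite IH subn0.
have -> : (D.+1 + k.+1 = (D + k.+1).+1)%N by lia.
by rewrite binS addnC; congr (_ + 'C(_, _))%N; lia.
Qed.

Definition gen (R : nzRingType) (mu a : R) (s d : nat) : R :=
  if (s <= d)%N then a * mu ^+ (d - s) else 0.

Lemma pw_gen (R : comNzRingType) (mu a : R) s k d :
  pw (gen mu a s) k d = if (s * k.+1 <= d)%N then
     a ^+ k.+1 * ('C(d - s * k.+1 + k, k))%:R * mu ^+ (d - s * k.+1) else 0.
Proof.
elim: k d => [|k IH] d.
  rewrite /= /gen muln1 bin0 expr1 mulr1; by case: ifP.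
rewrite /= /conv.
under eq_bigr => t _ do rewrite IH.
rewrite (eq_bigr (fun t : 'I_d.+1 => if ((s <= t)%N && (t < (d - s * k.+1).+1)%N) then
   a ^+ k.+1 * ('C(d - t - s * k.+1 + k, k))%:R * mu ^+ (d - t - s * k.+1) * (a * mu ^+ (t - s)) else 0)); last first.
  move=> t _; rewrite /gen; have ht := ltn_ord t.
  case: (leqP s t) => h1; last first.
    by rewrite mulr0.
  case: (leqP (s * k.+1) (d - t)) => h2.
    by rewrite /= ifT //; lia.
  rewrite mul0r /= ifF //; apply/negbTE; rewrite -leqNgt. nia.
etransitivity.
  apply: (@sum_window _ _ (fun t => ((s <= t)%N && (t < (d - s * k.+1).+1)%N))
   (fun t => a ^+ k.+1 * ('C(d - t - s * k.+1 + k, k))%:R * mu ^+ (d - t - s * k.+1) * (a * mu ^+ (t - s)))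
   s (d - s * k.+1).+1) => //; try lia.
case: leqP => hd; last first.
  have -> : ((d - s * k.+1).+1 - s = 0)%N by lia.
  by rewrite big_ord0.
set D := (d - s * k.+2)%N.
have -> : ((d - s * k.+1).+1 - s = D.+1)%N by rewrite /D; lia.
rewrite (eq_bigr (fun u : 'I_D.+1 => a ^+ k.+2 * mu ^+ D * ('C(D - u + k, k))%:R)); last first.
  move=> u _; have hu := ltn_ord u.
  have -> : (d - (u + s) - s * k.+1 = D - u)%N by rewrite /D; lia.
  have -> : (u + s - s = u)%N by lia.
  have e : mu ^+ D = mu ^+ (D - u) * mu ^+ u by rewrite -exprD subnK //; lia.
  rewrite e !exprS.
  move: (a ^+ k) (mu ^+ (D - u)) (mu ^+ u) ('C(D - u + k, k)%:R : R) => x y z w.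
  ring.
rewrite -mulr_sumr -natr_sum hockey.
by rewrite mulrAC.
Qed.



Lemma entry_norm (R : numDomainType) (mu a : R) s k N (i j : 'I_N.+1) :
  `|tmx N.+1 (pw (gen mu a s) k) i j| =
  if (j + s * k.+1 <= i)%N then
    `|a| ^+ k.+1 * ('C(i - j - s * k.+1 + k, k))%:R * `|mu| ^+ (i - j - s * k.+1)
  else 0.
Proof.
rewrite mxE pw_gen.
case: (leqP j i) => h1.
  case: (leqP (s * k.+1) (i - j)) => h2.
    rewrite ifT; last by lia.
    by rewrite !normrM !normrX normr_nat.
  by rewrite ifF ?normr0 //; apply/negbTE; rewrite -ltnNge; lia.
by rewrite ifF ?normr0 //; apply/negbTE; rewrite -ltnNge; lia.
Qed.

Lemma norms_pw (R : numDomainType) (mu a : R) s k N :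
  (s * k.+1 <= N)%N ->
  let S := `|a| ^+ k.+1 * \sum_(u < (N - s * k.+1).+1) ('C(u + k, k))%:R * `|mu| ^+ u in
  norm1 (tmx N.+1 (pw (gen mu a s) k)) = S /\
  normInf (tmx N.+1 (pw (gen mu a s) k)) = S.
Proof.
move=> hr S.
set r := (s * k.+1)%N.
set g := fun u : nat => `|a| ^+ k.+1 * ('C(u + k, k))%:R * `|mu| ^+ u.
have g0 : forall u, 0 <= g u.
  by move=> u; rewrite /g !mulr_ge0 ?exprn_ge0 ?ler0n ?normr_ge0.
have hS : S = \sum_(u < (N - r).+1) g u.
  by rewrite /S mulr_sumr; apply: eq_bigr => u _; rewrite /g mulrA.
have G0 : forall m, 0 <= \sum_(u < m) g u by move=> m; apply: sumr_ge0.
split.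
- rewrite /norm1.
  have col : forall j : 'I_N.+1, \sum_(i < N.+1) `|tmx N.+1 (pw (gen mu a s) k) i j|
      = \sum_(u < N.+1 - (j + r)) g u.
    move=> j; under eq_bigr => i _ do rewrite entry_norm.
    etransitivity.
      apply: (@sum_window _ _ (fun i => (j + r <= i)%N) (fun i => g (i - j - r)%N) (j + r) N.+1) => //.
      by move=> t ht; rewrite ht andbT.
    by apply: eq_bigr => u _; congr (g _); lia.
  under eq_bigr => j _ do rewrite col.
  rewrite (@bigmax_attained _ _ _ ord0) /=.
    by rewrite hS add0n -subSn.
  move=> j; rewrite G0 /=; apply: sum_mono => //; lia.
- rewrite /normInf.
  have row : forall i : 'I_N.+1, \sum_(j < N.+1) `|tmx N.+1 (pw (gen mu a s) k) i j|
      = \sum_(u < i.+1 - r) g u.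
    move=> i; under eq_bigr => j _ do rewrite entry_norm.
    etransitivity.
      apply: (@sum_window _ _ (fun j => (j + r <= i)%N) (fun j => g (i - j - r)%N) 0 (i.+1 - r)).
        by move=> t; lia.
      by have := ltn_ord i; lia.
    rewrite subn0 -[RHS](big_mkord xpredT g) big_rev_mkord subn0.
    by apply: eq_bigr => u _; congr (g _); have := ltn_ord u; lia.
  under eq_bigr => i _ do rewrite row.
  rewrite (@bigmax_attained _ _ _ ord_max) /=.
    by rewrite hS -subSn.
  move=> i; rewrite G0 /=; apply: sum_mono => //; have := ltn_ord i; lia.
Qed.



Definition bseq (R : nzRingType) (g : R) (d : nat) : R :=
  if d == 0%N then 1 else if d == 1%N then - g else 0.

Lemma bidiag_tmx (R : nzRingType) N (g : R) : bidiag N g = tmx N.+1 (bseq g).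
Proof.
apply/matrixP => i j; rewrite !mxE /bseq.
case: (ltngtP j i) => h.
- case: eqP => e1; case: eqP => e2; try case: eqP => e3; rewrite //; exfalso; lia.
- by case: eqP => // e1; exfalso; lia.
- by rewrite h subnn.
Qed.

Lemma tmx_delta (R : nzRingType) n :
  1%:M = tmx n (fun d => (d == 0%N)%:R) :> 'M[R]_n.
Proof.
apply/matrixP => i j; rewrite !mxE -val_eqE /=; case: leqP => h.
  by congr (_%:R); apply/eqP/eqP; lia.
by rewrite eqn_leq [(j <= i)%N]leqNgt h andbF.
Qed.

Lemma conv_geo_b (R : comNzRingType) (mu g : R) d :
  conv (fun e => mu ^+ e) (bseq g) d =
  if d is d'.+1 then mu ^+ d'.+1 - g * mu ^+ d' else 1.
Proof.
rewrite /conv; case: d => [|d].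
  by rewrite big_ord_recl big_ord0 /bseq /= expr0 mulr1 addr0.
rewrite big_ord_recl big_ord_recl /= big1; last first.
  by move=> t _; rewrite /bseq /= mulr0.
rewrite /bseq /= subn0 mulr1 addr0 subSS subn0 mulrN mulrC.
by [].
Qed.

Lemma conv_gen_q (R : comNzRingType) (mu c g : R) d :
  conv (gen mu c 1) (fun e => if e == 1%N then g else 0) d = gen mu (c * g) 2 d.
Proof.
rewrite /conv /gen; case: d => [|d].
  by rewrite big_ord_recl big_ord0 /= mulr0 addr0.
rewrite big_ord_recl big_ord_recl /= big1; last by move=> t _; rewrite /= mulr0.
rewrite mulr0 add0r addr0 subn1 /=.
case: d => [|d] /=; first by rewrite mul0r.
have -> : (d.+2 - 2 = d)%N by lia.
by rewrite mulrAC.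
Qed.

Lemma target_tmx (R : nzRingType) N s (c mu : R) :
  \matrix_(i, j) (if (j + s <= i)%N then c * mu ^+ (i - j - s) else 0)
  = tmx N.+1 (gen mu c s).
Proof.
apply/matrixP => i j; rewrite !mxE /gen.
case: leqP => h1; case: leqP => h2 //.
- by rewrite ifT //; lia.
- exfalso; lia.
- by case: leqP => h3 //; exfalso; lia.
Qed.

Lemma eq_tmx (R : nzRingType) n (f g : nat -> R) :
  (forall d, f d = g d) -> tmx n f = tmx n g.
Proof. by move=> e; apply/matrixP => i j; rewrite !mxE e. Qed.

Lemma inv_Ac (C : comUnitRingType) N (mu : C) :
  invmx (bidiag N mu) = tmx N.+1 (fun e => mu ^+ e).
Proof.
have h : tmx N.+1 (fun e => mu ^+ e) *m bidiag N mu = 1%:M.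
  by rewrite bidiag_tmx tmx_mul tmx_delta; apply: eq_tmx => d; rewrite conv_geo_b; case: d => //= d; rewrite exprS subrr.
have h2 := mulmx1C h.
have [u _] := mulmx1_unit h2.
by rewrite -[RHS](mulKmx u) h2 mulmx1.
Qed.



Lemma sum_binom (R : nzRingType) (x : R) n k :
  \sum_(u < n) ('C(u + k, k))%:R * x ^+ u =
  \sum_(0 <= j < n) ('C(j + k.+1 - 1, j))%:R * x ^+ j.
Proof.
rewrite big_mkord; apply: eq_bigr => j _.
have -> : (j + k.+1 - 1 = j + k)%N by lia.
by rewrite -bin_sub ?leq_addl // addnK.
Qed.

Theorem mainTheorem2 (C : numClosedFieldType) (lambda mu : C) (m N : nat)
  (hm : (1 <= m)%N) (hN : (1 <= N)%N) :
  let Ac := bidiag N mu in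
  let AS := bidiag N (lambda ^+ m) in
  let EF := 1%:M - invmx Ac *m AS in
  let EFCF := (1%:M - invmx Ac *m AS) *m (1%:M - AS) in
  [/\ EF = \matrix_(i, j) (if (j < i)%N
                           then (lambda ^+ m - mu) * mu ^+ (i - j - 1)
                           else 0),
      EFCF = \matrix_(i, j) (if (j.+2 <= i)%N
                             then (lambda ^+ m - mu) * lambda ^+ m * mu ^+ (i - j - 2)
                             else 0),
      (forall k : nat, (1 <= k)%N -> (k <= N)%N ->
         norm1 (EF ^+ k) = `|lambda ^+ m - mu| ^+ k *
           (\sum_(0 <= j < (N - k).+1) ('C(j + k - 1, j))%:R * `|mu| ^+ j)
         /\ normInf (EF ^+ k) = `|lambda ^+ m - mu| ^+ k *
           (\sum_(0 <= j < (N - k).+1) ('C(j + k - 1, j))%:R * `|mu| ^+ j))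
    & (forall k : nat, (1 <= k)%N -> (2 * k <= N)%N ->
         norm1 (EFCF ^+ k) = `|lambda ^+ m - mu| ^+ k * `|lambda| ^+ (m * k) *
           (\sum_(0 <= j < (N - 2 * k).+1) ('C(j + k - 1, j))%:R * `|mu| ^+ j)
         /\ normInf (EFCF ^+ k) = `|lambda ^+ m - mu| ^+ k * `|lambda| ^+ (m * k) *
           (\sum_(0 <= j < (N - 2 * k).+1) ('C(j + k - 1, j))%:R * `|mu| ^+ j))].
Proof.
move=> Ac AS EF EFCF.
set c := lambda ^+ m - mu.
have hEF : EF = tmx N.+1 (gen mu c 1).
  rewrite /EF /Ac /AS inv_Ac bidiag_tmx tmx_mul tmx_delta.
  apply/matrixP => i j; rewrite !mxE /gen.
  case: (leqP j i) => h; last by rewrite subr0.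
  rewrite conv_geo_b; case: (i - j)%N => [|d] /=; first by rewrite subrr.
  by rewrite subn1 /= /c exprS; ring.
have hAS1 : 1%:M - AS = tmx N.+1 (fun e => if e == 1%N then lambda ^+ m else 0).
  rewrite /AS bidiag_tmx tmx_delta; apply/matrixP => i j; rewrite !mxE /bseq.
  case: (leqP j i) => h; last by rewrite subr0.
  by case: (i - j)%N => [|[|d]] /=; rewrite ?subrr ?sub0r ?opprK ?subr0.
have hEFCF : EFCF = tmx N.+1 (gen mu (c * lambda ^+ m) 2).
  have -> : EFCF = EF *m (1%:M - AS) by [].
  by rewrite hEF hAS1 tmx_mul; apply: eq_tmx => d; apply: conv_gen_q.
split.
- rewrite hEF -(target_tmx N 1 c mu); apply/matrixP => i j; rewrite !mxE addn1.
  by [].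
- rewrite hEFCF -(target_tmx N 2 (c * lambda ^+ m) mu); apply/matrixP => i j; rewrite !mxE addn2.
  by [].
- move=> k; case: k => [//|k] _ hkN.
  rewrite hEF tmx_pow.
  have hh : (1 * k.+1 <= N)%N by rewrite mul1n.
  have [-> ->] := @norms_pw C mu c 1 k N hh.
  by rewrite mul1n sum_binom.
- move=> k; case: k => [//|k] _ hkN.
  rewrite hEFCF tmx_pow.
  have [-> ->] := @norms_pw C mu (c * lambda ^+ m) 2 k N hkN.
  by rewrite sum_binom normrM exprMn normrX -exprM.
Qed.
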